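(* Let $n,m$ be integers with $n\geq m\geq 0$. For every integer $k\geq 4$, $$ gr_{k}(K_{3} : S(n,m)) \geq \begin{cases} 5\cdot\frac{n}{2} + m(k-3)+1 & \text{ if $n$ is even,}\\ 5\cdot\frac{n-1}{2} + m(k-3)+ 2 & \text{ if $n$ is odd.} \end{cases} $$
   Context: For integers $n\geq m\geq 0$, the double star $S(n,m)$ is the graph obtained from the disjoint union of the stars $K_{1,n}$ and $K_{1,m}$ by adding an edge between their centers. A $k$-coloring of a graph is an assignment of one of $k$ colors to each edge. A subgraph is rainbow if all its edges have distinct colors and monochromatic if all its edges have the same color. For graphs $G,H$ and a positive integer $k$, the Gallai–Ramsey number $gr_k(G:H)$ is the minimum integer $N$ such that every $k$-coloring of the edges of the complete graph $K_N$ contains either a rainbow copy of $G$ or a monochromatic copy of $H$. *)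

(* Defs.v *)
From mathcomp Require Import all_boot.
Set Implicit Arguments. Unset Strict Implicit. Unset Printing Implicit Defensive.

(* A k-coloring of the edges of K_N: a symmetric map c : 'I_N -> 'I_N -> 'I_k;
   the value c x y for x <> y is the color of the edge {x,y}
   (diagonal values are irrelevant). *)
Definition edge_coloring (N k : nat) (c : 'I_N -> 'I_N -> 'I_k) : Prop :=
  forall x y, c x y = c y x.

(* A (simple) graph H is given by a finite vertex type V and a symmetric
   irreflexive adjacency relation E. *)

Definition rainbow_copy (V : finType) (E : rel V) (N k : nat)
  (c : 'I_N -> 'I_N -> 'I_k) : Prop :=
  exists f : V -> 'I_N, injective f /\
    forall u1 v1 u2 v2, E u1 v1 -> E u2 v2 ->
      c (f u1) (f v1) = c (f u2) (f v2) ->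
      (u1 = u2 /\ v1 = v2) \/ (u1 = v2 /\ v1 = u2).

Definition mono_copy (V : finType) (E : rel V) (N k : nat)
  (c : 'I_N -> 'I_N -> 'I_k) : Prop :=
  exists f : V -> 'I_N, injective f /\
    exists i : 'I_k, forall u v, E u v -> c (f u) (f v) = i.

Definition K3_adj : rel 'I_3 := fun x y => x != y.

(* The double star S(n,m) on vertex set 'I_(n+m+2):
   vertex 0 is the center of K_{1,n}, vertex 1 the center of K_{1,m},
   vertices 2..n+1 are the leaves of the first star,
   vertices n+2..n+m+1 the leaves of the second star. *)
Definition dstar_arc (n m : nat) : rel 'I_(n + m + 2) := fun x y =>
  [|| (val x == 0) && (val y == 1),
      (val x == 0) && (2 <= val y < n + 2)
    | (val x == 1) && (n + 2 <= val y)].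

Definition dstar_adj (n m : nat) : rel 'I_(n + m + 2) := fun x y =>
  @dstar_arc n m x y || @dstar_arc n m y x.

(* N has the Gallai-Ramsey property for (G : H) with k colors: every
   k-coloring of K_N contains a rainbow G or a monochromatic H.
   gr_k(G:H) is the least such N. *)
Definition gr_property (VG : finType) (EG : rel VG) (VH : finType) (EH : rel VH)
  (k N : nat) : Prop :=
  forall c : 'I_N -> 'I_N -> 'I_k, edge_coloring c ->
    rainbow_copy EG c \/ mono_copy EH c.

(* Main.v *)
Require Import Defs.
From mathcomp Require Import all_boot zify.

Definition ss n := 5 * n./2 + odd n.
Definition hh n m w := if w < ss n then 0 else (w - ss n) %/ m + 1.
Definition part n x := if x < 4 * n./2 then x %/ n./2 else 4.
Definition near5 p q := ((p+1) %% 5 == q) || ((q+1) %% 5 == p).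
Definition EE p q := if p == q then 2 else if near5 p q then 0 else 1.
Definition DD n m x y := if hh n m x == 0 then EE (part n x) (part n y) else 2.
Definition col n m x y :=
  if hh n m x == hh n m y then DD n m x y else 2 + maxn (hh n m x) (hh n m y).
Definition partseq n p :=
  if p == 4 then iota (4 * n./2) (n./2 + odd n) else iota (p * n./2) n./2.
Definition group n m g := iota (ss n + g * m) m.

Lemma EE_sym p q : EE p q = EE q p.
Proof. by rewrite /EE eq_sym /near5 orbC. Qed.

Lemma col_sym n m x y : col n m x y = col n m y x.
Proof.
rewrite /col eq_sym maxnC; case: eqP => // e.
by rewrite /DD e; case: ifP => // _; rewrite EE_sym.
Qed.

Lemma EE_le2 p q : EE p q <= 2.
Proof. by rewrite /EE; case: ifP => //; case: ifP. Qed.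

Lemma DD_le2 n m x y : DD n m x y <= 2.
Proof. by rewrite /DD; case: ifP => // _; apply: EE_le2. Qed.

Lemma EE_tri p q r : p < 5 -> q < 5 -> r < 5 ->
  (EE p q == EE q r) || (EE q r == EE p r) || (EE p q == EE p r).
Proof.
by case: p => [|[|[|[|[|p]]]]] //; case: q => [|[|[|[|[|q]]]]] //;
   case: r => [|[|[|[|[|r]]]]].
Qed.

Lemma part_lt5 n x : part n x < 5.
Proof.
rewrite /part; case: ifP => // h.
have a0 : 0 < n./2 by lia.
by apply: (@leq_trans 4) => //; rewrite ltn_divLR // mulnC.
Qed.

Lemma col_tri n m x y z :
  col n m x y = col n m y z \/ col n m y z = col n m x z \/ col n m x y = col n m x z.
Proof.
rewrite /col; case: ifP => [/eqP e1|/eqP n1]; case: ifP => [/eqP e2|/eqP n2];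
  case: ifP => [/eqP e3|/eqP n3]; try lia.
rewrite /DD -e1; case: ifP => _; last by left.
have := @EE_tri (part n x) (part n y) (part n z) (part_lt5 n x) (part_lt5 n y) (part_lt5 n z).
by case/orP => [/orP[]|] /eqP; auto.
Qed.

Lemma hh_le n m K w : w < ss n + m * K -> hh n m w <= K.
Proof.
rewrite /hh; case: ifP => // /negbT; rewrite -leqNgt => h1 h2.
have m0 : 0 < m by case: m h2 => //; rewrite mul0n addn0; lia.
rewrite addn1 ltn_divLR //; lia.
Qed.

Lemma group_mem n m K w g : w < ss n + m * K -> hh n m w = g.+1 ->
  w \in group n m g.
Proof.
rewrite /hh /group mem_iota; case: ifP => // /negbT; rewrite -leqNgt => h1 h2.
have m0 : 0 < m by case: m h2 => //; rewrite mul0n addn0; lia.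
rewrite addn1 => -[e].
have := divn_eq (w - ss n) m; have := ltn_pmod (w - ss n) m0.
rewrite e; lia.
Qed.

Lemma hh0 n m w : hh n m w = 0 -> w < ss n.
Proof. by rewrite /hh; case: ifP => //; rewrite addn1. Qed.

Lemma part_mem n x : x < ss n -> x \in partseq n (part n x).
Proof.
rewrite /partseq /part /ss => h2; case: (ltnP x (4 * n./2)) => h1.
  have a0 : 0 < n./2 by lia.
  have h3 : x %/ n./2 < 4 by rewrite ltn_divLR // mulnC.
  rewrite (ltn_eqF h3) mem_iota.
  have := divn_eq x n./2; have := ltn_pmod x a0; lia.
by rewrite eqxx mem_iota; lia.
Qed.

Lemma size_partseq n p : size (partseq n p) = n./2 + (if p == 4 then nat_of_bool (odd n) else 0).
Proof. by rewrite /partseq; case: ifP; rewrite size_iota ?addn0. Qed.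

Lemma EE_two pu c : pu < 5 -> c < 2 -> exists p q, [/\ p != q, p < 5, q < 5 &
  forall pw, pw < 5 -> EE pu pw = c -> pw = p \/ pw = q].
Proof.
move=> hp hc; exists ((pu + 1 + c) %% 5), ((pu + 4 - c) %% 5).
move: hp hc; case: pu => [|[|[|[|[|pu]]]]] //; case: c => [|[|c]] // _ _;
  split => // pw; case: pw => [|[|[|[|[|pw]]]]] //= _; auto.
Qed.

Lemma col_gt n m x y w : col n m x w = col n m x y -> hh n m x < hh n m y ->
  hh n m w = hh n m y.
Proof.
move=> e lt; move: e; rewrite /col (ltn_eqF lt).
have := DD_le2 n m x w; case: ifP => [/eqP|/eqP]; lia.
Qed.

Lemma col_same n m x y w : hh n m x = hh n m y -> col n m x w = col n m x y ->
  hh n m w = hh n m x.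
Proof.
move=> e; rewrite /col e eqxx; have := DD_le2 n m x y.
case: ifP => [/eqP|/eqP]; lia.
Qed.
Lemma no_mono n m K N u v U V i : m <= n -> N <= ss n + m * K ->
  u < N -> v < N -> all (fun w => w < N) U -> all (fun w => w < N) V ->
  uniq [:: u, v & U] -> uniq (u :: V) -> size U = n -> size V = m ->
  col n m u v = i -> (forall w, w \in U -> col n m u w = i) ->
  (forall w, w \in V -> col n m v w = i) -> False.
Proof.
move=> mn NK uN vN /allP UN /allP VN uqU uqV sU sV cuv cU cV.
have uqU' : uniq (v :: U) by case/andP: uqU.
have lt w : w < N -> w < ss n + m * K by move=> h; apply: leq_trans NK.
have hn : odd n + n./2 * 2 = n by rewrite muln2 odd_double_half.
have ho : odd n <= 1 by case: odd.
case: (ltngtP (hh n m u) (hh n m v)) => huv.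
- have sub : {subset v :: U <= group n m (hh n m v).-1}.
    move=> w; rewrite inE => /orP[/eqP ->|wU].
      by apply: (@group_mem n m K); [apply: lt | lia].
    apply: (@group_mem n m K); first by apply: lt; apply: UN.
    rewrite (@col_gt n m u v) //; [lia | by rewrite cU // cuv].
  have := uniq_leq_size uqU' sub.
  rewrite /group size_iota /= sU; lia.
- have sub : {subset u :: V <= group n m (hh n m u).-1}.
    move=> w; rewrite inE => /orP[/eqP ->|wV].
      by apply: (@group_mem n m K); [apply: lt | lia].
    apply: (@group_mem n m K); first by apply: lt; apply: VN.
    rewrite (@col_gt n m v u) //; [lia | by rewrite cV // col_sym cuv].
  have := uniq_leq_size uqV sub.
  rewrite /group size_iota /= sV; lia.
have same w : w \in [:: u, v & U] -> hh n m w = hh n m u.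
  rewrite !inE => /orP[/eqP ->//|/orP[/eqP ->//|wU]].
  by apply: (@col_same n m u v) => //; rewrite cU // cuv.
have wN w : w \in [:: u, v & U] -> w < N.
  by rewrite !inE => /orP[/eqP ->//|/orP[/eqP ->//|wU]]; apply: UN.
case e0: (hh n m u) => [|g].
- have cw w : w \in v :: U -> w < ss n /\ EE (part n u) (part n w) = i.
    move=> wi; have hw : hh n m w = 0.
      by rewrite -e0; apply: same; rewrite inE wi orbT.
    split; first exact: hh0 hw.
    move: wi; rewrite inE => /orP[/eqP ->|wU].
    + by rewrite -cuv /col /DD -huv e0.
    + by rewrite -(cU w wU) /col /DD hw e0.
  case: (eqVneq (part n u) (part n v)) => pe.
  + have sub : {subset [:: u, v & U] <= partseq n (part n u)}.
      move=> w; rewrite inE => /orP[/eqP ->|wi].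
        by apply: part_mem; apply: (@hh0 n m).

      have [ws ew] := cw w wi.
      have : part n u = part n w.
        move: ew; rewrite -(proj2 (cw v _)) ?inE ?eqxx ?orbT // -pe /EE eqxx.
        by case: eqP => // _; case: ifP.
      by move=> ->; apply: part_mem.
    have := uniq_leq_size uqU sub.
    rewrite size_partseq /= sU; case: ifP; lia.
  + have ci : i < 2.
      rewrite -(proj2 (cw v _)) ?inE ?eqxx ?orbT // /EE (negbTE pe).
      by case: ifP.
    have [p [q [pq p5 q5 Hpq]]] := @EE_two (part n u) i (part_lt5 n u) ci.
    have sub : {subset v :: U <= partseq n p ++ partseq n q}.
      move=> w wi; have [ws ew] := cw w wi.
      rewrite mem_cat; case: (Hpq (part n w) (part_lt5 n w) ew) => <-;
        by rewrite part_mem ?orbT.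
    have := uniq_leq_size uqU' sub.
    rewrite size_cat !size_partseq /= sU.
    case: eqP => ep; case: eqP => eq; try lia.
- have sub : {subset [:: u, v & U] <= group n m g}.
    move=> w wi; apply: (@group_mem n m K); first exact: lt (wN w wi).
    by rewrite same.
  have := uniq_leq_size uqU sub.
  rewrite /group size_iota /= sU; lia.
Qed.

Theorem lemma2 (n m k : nat) : m <= n -> 4 <= k ->
  forall N : nat, gr_property K3_adj (@dstar_adj n m) k N ->
  (if odd n then 5 * ((n - 1) %/ 2) + m * (k - 3) + 2
   else 5 * (n %/ 2) + m * (k - 3) + 1) <= N.
Proof.
move=> mn k4 N HN.
have hn : odd n + n./2 * 2 = n by rewrite muln2 odd_double_half.
have -> : (if odd n then 5 * ((n - 1) %/ 2) + m * (k - 3) + 2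
   else 5 * (n %/ 2) + m * (k - 3) + 1) = (ss n + m * (k - 3)).+1.
  rewrite /ss -!divn2; case: ifP => o; rewrite o in hn; rewrite -divn2 in hn; lia.
case: (leqP N (ss n + m * (k - 3))) => // hNL; exfalso.
case: k k4 HN hNL => [//|k'] k4 HN hNL.
pose c (x y : 'I_N) : 'I_k'.+1 := inord (col n m x y).
have cval (x y : 'I_N) : val (c x y) = col n m x y.
  rewrite /c; apply: inordK.
  have hx := @hh_le n m (k'.+1 - 3) x (leq_trans (ltn_ord x) hNL).
  have hy := @hh_le n m (k'.+1 - 3) y (leq_trans (ltn_ord y) hNL).
  have := DD_le2 n m x y; rewrite /col; case: ifP => _; lia.
have sym : edge_coloring c by move=> x y; rewrite /c col_sym.
case: (HN c sym).
  move=> [f [finj Hf]].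
  pose o0 : 'I_3 := @Ordinal 3 0 isT.
  pose o1 : 'I_3 := @Ordinal 3 1 isT.
  pose o2 : 'I_3 := @Ordinal 3 2 isT.
  have ceq (a b a' b' : 'I_3) : col n m (f a) (f b) = col n m (f a') (f b') ->
      c (f a) (f b) = c (f a') (f b') by move=> e; apply: val_inj; rewrite !cval.
  case: (col_tri n m (f o0) (f o1) (f o2)) => [e|[e|e]].
  - by case: (Hf o0 o1 o1 o2 isT isT (ceq _ _ _ _ e)) => -[].
  - by case: (Hf o1 o2 o0 o2 isT isT (ceq _ _ _ _ e)) => -[].
  - by case: (Hf o0 o1 o0 o2 isT isT (ceq _ _ _ _ e)) => -[].
move=> [f [finj [i Hi]]].
have d0p : 0 < n + m + 2 by rewrite addn2.
pose d0 : 'I_(n + m + 2) := Ordinal d0p.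
pose oj j : 'I_(n + m + 2) := insubd d0 j.
have vo j : j < n + m + 2 -> val (oj j) = j by move=> h; rewrite val_insubd h.
pose F j := val (f (oj j)).
have Finj j1 j2 : j1 < n + m + 2 -> j2 < n + m + 2 -> F j1 = F j2 -> j1 = j2.
  move=> h1 h2 /val_inj /finj /(congr1 val); rewrite !vo //.
have adj0 j : 1 <= j < n + 2 -> dstar_adj (oj 0) (oj j).
  move=> hj; rewrite /dstar_adj /dstar_arc (vo 0 ltac:(lia)) (vo j ltac:(lia)).
  lia.
have adj1 j : n + 2 <= j < n + m + 2 -> dstar_adj (oj 1) (oj j).
  move=> hj; rewrite /dstar_adj /dstar_arc (vo 1 ltac:(lia)) (vo j ltac:(lia)).
  lia.
have cF j1 j2 : dstar_adj (oj j1) (oj j2) -> col n m (F j1) (F j2) = val i.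
  by move=> h; rewrite -cval Hi.
apply: (@no_mono n m (k'.+1 - 3) N (F 0) (F 1) (map F (iota 2 n))
          (map F (iota (n + 2) m)) (val i)) => //.
- exact: ltn_ord.
- exact: ltn_ord.
- by apply/allP => w /mapP [j _ ->]; apply: ltn_ord.
- by apply/allP => w /mapP [j _ ->]; apply: ltn_ord.
- change (uniq (map F (iota 0 n.+2))).
  rewrite map_inj_in_uniq ?iota_uniq // => j1 j2; rewrite !mem_iota => h1 h2.
  by apply: Finj; lia.
- change (uniq (map F (0 :: iota (n + 2) m))).
  rewrite map_inj_in_uniq.
    by rewrite /= mem_iota iota_uniq; apply/negP; lia.
  move=> j1 j2; rewrite !inE !mem_iota => h1 h2.
  by apply: Finj; lia.
- by rewrite size_map size_iota.
- by rewrite size_map size_iota.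
- by apply: cF; apply: adj0; lia.
- move=> w /mapP [j]; rewrite mem_iota => hj ->.
  by apply: cF; apply: adj0; lia.
- move=> w /mapP [j]; rewrite mem_iota => hj ->.
  by apply: cF; apply: adj1; lia.
Qed.
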